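(* Let $f(k)$ denote the largest power of $2$ dividing $k\in\mathbb{N}_1$, and let $\gamma\in[0,1)$. Then $$\sum_{k=1}^{\infty}\gamma^k f(k)\le\frac{1}{1-\gamma}\left(\frac{1}{e}+\frac{1}{\ln 2}+\frac{1}{2}\log_2\ln 16+\frac{1}{2}\log_2\frac{1}{1-\gamma}\right).$$
   Context: The function $f$ is OEIS A6519: $f(k)=1$ for $k$ odd and $f(k)=2f(k/2)$ for $k$ even. *)

(* Defs.v *)
From Stdlib Require Import Reals Lra Lia Arith.
From Coquelicot Require Import Coquelicot.
Open Scope R_scope.

(* OEIS A6519: f(k) = 1 for k odd, f(k) = 2 f(k/2) for k even;
   i.e. the largest power of 2 dividing k (for k >= 1).  Defined via
   fuel-bounded recursion; f 0 = 1 is an irrelevant convention. *)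
Fixpoint f_aux (fuel k : nat) : nat :=
  match fuel with
  | O => 1%nat
  | S fuel' => if Nat.even k then
                 match k with O => 1%nat | _ => (2 * f_aux fuel' (Nat.div2 k))%nat end
               else 1%nat
  end.

Definition a6519 (k : nat) : nat := f_aux k k.

(* Main.v *)
Require Import Defs.
From Stdlib Require Import Reals Lra Lia Arith.
From Coquelicot Require Import Coquelicot.
Open Scope R_scope.

Lemma f_aux_unfold : forall fuel k, f_aux (S fuel) k =
  if Nat.even k then match k with O => 1%nat | _ => (2 * f_aux fuel (Nat.div2 k))%nat end else 1%nat.
Proof. reflexivity. Qed.

Lemma f_aux_S : forall fuel k, (1 <= k <= fuel)%nat -> f_aux (S fuel) k = f_aux fuel k.
Proof.
  induction fuel as [|f IH]; intros k Hk; [lia|].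
  rewrite (f_aux_unfold (S f) k), (f_aux_unfold f k).
  destruct (Nat.even k) eqn:E; [|reflexivity].
  destruct k as [|k']; [reflexivity|].
  f_equal. apply IH.
  destruct k' as [|k'']; [discriminate E|].
  split.
  - simpl. destruct k''; simpl; lia.
  - destruct f; [lia|]. simpl.
    pose proof (Nat.div2_le_upper_bound k'' f). lia.
Qed.

Lemma f_aux_fuel : forall d k, (1 <= k)%nat -> f_aux (d + k) k = a6519 k.
Proof.
  induction d; intros k Hk; [reflexivity|].
  rewrite Nat.add_succ_l, f_aux_S by lia. apply IHd; lia.
Qed.

Lemma a_odd : forall m, a6519 (2*m+1) = 1%nat.
Proof.
  intro m. unfold a6519. replace (2*m+1)%nat with (S (2*m)) by lia.
  rewrite f_aux_unfold, Nat.even_succ, Nat.odd_mul. reflexivity.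
Qed.

Lemma a_even : forall m, a6519 (2*(S m)) = (2 * a6519 (S m))%nat.
Proof.
  intro m. unfold a6519 at 1. replace (2*(S m))%nat with (S (S (2*m))) by lia.
  rewrite f_aux_unfold.
  replace (Nat.even (S (S (2*m)))) with true.
  2:{ rewrite Nat.even_succ, Nat.odd_succ, Nat.even_mul. reflexivity. }
  f_equal. replace (Nat.div2 (S (S (2*m)))) with (S m).
  2:{ replace (S (S (2*m))) with (2 * S m)%nat by lia. rewrite Nat.div2_double. reflexivity. }
  replace (S (2*m)) with (m + S m)%nat by lia. apply f_aux_fuel. lia.
Qed.

Lemma div_le : forall a b c d, 0 < b -> 0 < d -> a * d <= c * b -> a / b <= c / d.
Proof.
  intros a b c d Hb Hd H.
  assert (E: c / d - a / b = (c*b - a*d) / (b*d)) by (field; lra).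
  assert (0 <= (c*b - a*d) / (b*d)).
  { apply Rmult_le_pos; [lra|]. left. apply Rinv_0_lt_compat. nra. }
  lra.
Qed.

Lemma sinh_ge : forall t, 0 <= t -> t <= sinh t.
Proof.
  intros t Ht. destruct (Req_dec t 0) as [->|Hn].
  - rewrite sinh_0. lra.
  - destruct (MVT_cor2 sinh cosh 0 t) as [c [Hc Hint]]; [lra| intros; apply derivable_pt_lim_sinh |].
    rewrite sinh_0 in Hc.
    assert (1 <= cosh c).
    { unfold cosh. rewrite exp_Ropp. pose proof (exp_pos c).
      assert (exp c + / exp c - 2 = (exp c - 1)^2 / exp c) by (field; lra).
      assert (0 <= (exp c - 1)^2 / exp c).
      { apply Rmult_le_pos; [apply pow2_ge_0| left; apply Rinv_0_lt_compat; lra]. }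
      lra. }
    nra.
Qed.

Lemma F1 : forall g, 0 < g < 1 -> g / (1 - g^2) <= / (2 * (- ln g)).
Proof.
  intros g Hg.
  set (t := - ln g).
  assert (Ht : 0 < t).
  { unfold t. pose proof (ln_increasing g 1 ltac:(lra) ltac:(lra)). rewrite ln_1 in H. lra. }
  assert (Hge : g = exp (- t)) by (unfold t; rewrite Ropp_involutive, exp_ln; lra).
  assert (Hgi : / g = exp t) by (rewrite Hge, exp_Ropp, Rinv_inv; reflexivity).
  pose proof (sinh_ge t ltac:(lra)) as Hs. unfold sinh in Hs.
  rewrite <- Hge, <- Hgi in Hs.
  replace (/ (2 * t)) with (1 / (2 * t)) by (field; lra).
  apply div_le; [nra| lra |].
  assert (2 * t * g <= 1 - g^2).
  { assert (t * g <= (/ g - g) / 2 * g) by (apply Rmult_le_compat_r; lra).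
    replace ((/ g - g) / 2 * g) with ((1 - g^2)/2) in H by (field; lra). lra. }
  lra.
Qed.

Fixpoint P (N : nat) (g : R) : R :=
  match N with O => 0 | S n => P n g + g ^ (S n) * INR (a6519 (S n)) end.
Fixpoint Q (M : nat) (g : R) : R :=
  match M with O => 0 | S m => Q m g + g ^ (2 * m + 1) end.

Lemma P_S : forall n g, P (S n) g = P n g + g^(S n) * INR (a6519 (S n)).
Proof. reflexivity. Qed.
Lemma Q_S : forall m g, Q (S m) g = Q m g + g ^ (2 * m + 1).
Proof. reflexivity. Qed.

Lemma P_double : forall M g, P (2 * M) g = Q M g + 2 * P M (g ^ 2).
Proof.
  induction M as [|M IH]; intro g; [simpl; lra|].
  replace (2 * S M)%nat with (S (S (2 * M))) by lia.
  rewrite !P_S, IH, Q_S.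
  replace (S (2*M)) with (2*M+1)%nat by lia. rewrite a_odd.
  replace (S (2*M+1)) with (2 * S M)%nat by lia. rewrite a_even.
  rewrite mult_INR, pow_mult. simpl INR. ring.
Qed.

Lemma Q_bound : forall M g, 0 <= g < 1 -> Q M g <= g / (1 - g^2).
Proof.
  intros M g Hg.
  assert (E : forall k, Q k g * (1 - g^2) = g - g^(2*k+1)).
  { induction k as [|k IH]; [simpl; ring|].
    rewrite Q_S, Rmult_plus_distr_r, IH.
    replace (2 * S k + 1)%nat with (2 * k + 1 + 2)%nat by lia.
    rewrite (pow_add g (2*k+1) 2). ring. }
  assert (0 < 1 - g^2) by nra.
  assert (Q M g = (g - g^(2*M+1)) / (1 - g^2)) by (rewrite <- E; field; lra).
  rewrite H0. apply div_le; [lra|lra|].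
  pose proof (pow_le g (2*M+1) ltac:(lra)). nra.
Qed.

Lemma P_mono : forall N N' g, 0 <= g -> (N <= N')%nat -> P N g <= P N' g.
Proof.
  intros N N' g Hg H. induction H; [lra|].
  rewrite P_S. pose proof (pow_le g (S m) Hg). pose proof (pos_INR (a6519 (S m))). nra.
Qed.

Definition Phi g := (- ln (- ln g) / (2 * ln 2) + 3/2) / (- ln g).
Definition Dd g := g / (1 - g)^2.
Definition Psi g := if Rle_dec (/ exp 1) g then Phi g else Dd g.

Lemma ln_le' : forall x y, 0 < x -> x <= y -> ln x <= ln y.
Proof.
  intros x y Hx H. destruct (Req_dec x y) as [->|Hn]; [lra|].
  left. apply ln_increasing; lra.
Qed.

Lemma ln2_bounds : / 2 < ln 2 < 1.
Proof.
  split; [apply ln_lt_2|].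
  pose proof (exp_ineq1 1 ltac:(lra)).
  rewrite <- (ln_exp 1). apply ln_increasing; lra.
Qed.

Lemma expm1_lt : 0 < / exp 1 < / 2.
Proof.
  split; [apply Rinv_0_lt_compat, exp_pos|].
  pose proof (exp_ineq1 1 ltac:(lra)).
  apply Rinv_lt_contravar; lra.
Qed.

Lemma t_props : forall g, / exp 1 <= g < 1 -> 0 < - ln g <= 1.
Proof.
  intros g Hg. pose proof expm1_lt.
  split.
  - pose proof (ln_increasing g 1 ltac:(lra) ltac:(lra)). rewrite ln_1 in H0. lra.
  - pose proof (ln_le' (/ exp 1) g ltac:(lra) (proj1 Hg)). rewrite ln_Rinv, ln_exp in H0 by apply exp_pos. lra.
Qed.

Lemma Phi_lower : forall g, / exp 1 <= g < 1 -> 3/2 * / (- ln g) <= Phi g.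
Proof.
  intros g Hg. destruct (t_props g Hg) as [H1 H2].
  unfold Phi. pose proof ln2_bounds.
  assert (ln (- ln g) <= 0) by (rewrite <- ln_1; apply ln_le'; lra).
  assert (0 <= - ln (- ln g) / (2 * ln 2)).
  { apply Rmult_le_pos; [lra| left; apply Rinv_0_lt_compat; lra]. }
  unfold Rdiv at 2. apply Rmult_le_compat_r; [left; apply Rinv_0_lt_compat; lra| lra].
Qed.

Lemma Psi_nonneg : forall g, 0 <= g < 1 -> 0 <= Psi g.
Proof.
  intros g Hg. unfold Psi. destruct (Rle_dec (/ exp 1) g).
  - pose proof (Phi_lower g ltac:(lra)). destruct (t_props g ltac:(lra)).
    pose proof (Rinv_0_lt_compat _ H0). lra.
  - unfold Dd. apply Rmult_le_pos; [lra|]. left. apply Rinv_0_lt_compat. nra.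
Qed.

Lemma ln_sq : forall g, 0 < g -> ln (g ^ 2) = 2 * ln g.
Proof. intros g Hg. rewrite ln_pow by lra. simpl INR. ring. Qed.

Lemma Psi_rec : forall g, 0 <= g < 1 -> g / (1 - g^2) + 2 * Psi (g ^ 2) <= Psi g.
Proof.
  intros g Hg. pose proof expm1_lt as He. pose proof ln2_bounds as Hl2.
  unfold Psi at 2. destruct (Rle_dec (/ exp 1) g) as [Hge|Hlt].
  - destruct (t_props g ltac:(lra)) as [Ht1 Ht2].
    assert (Hg0 : 0 < g) by lra.
    assert (Hr : g / (1 - g^2) <= / (2 * - ln g)) by (apply F1; lra).
    assert (Hr0 : 0 <= g / (1 - g^2)).
    { apply Rmult_le_pos; [lra|]. left. apply Rinv_0_lt_compat. nra. }
    unfold Psi. destruct (Rle_dec (/ exp 1) (g^2)) as [Hge2|Hlt2].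
    + assert (E : 2 * Phi (g^2) = Phi g - / (2 * - ln g)).
      { unfold Phi. rewrite ln_sq by lra.
        replace (- (2 * ln g)) with (2 * - ln g) by ring.
        rewrite ln_mult by lra. field. split; lra. }
      lra.
    + assert (Ht3 : / 2 < - ln g).
      { assert (g^2 < / exp 1) by lra.
        pose proof (ln_increasing (g^2) (/ exp 1) ltac:(nra) H).
        rewrite ln_sq, ln_Rinv, ln_exp in H0 by (try apply exp_pos; lra). lra. }
      pose proof (Phi_lower g ltac:(lra)) as HP.
      assert (ED : Dd (g^2) = (g / (1 - g^2))^2).
      { unfold Dd. field. nra. }
      rewrite ED.
      set (r := g / (1 - g^2)) in *.
      set (s := / (- ln g)) in *.
      assert (Hs : / (2 * - ln g) = s / 2) by (unfold s; field; lra).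
      assert (0 < s) by (unfold s; apply Rinv_0_lt_compat; lra).
      assert (Hs2 : s < 2).
      { assert (s * (- ln g) = 1) by (unfold s; field; lra). nra. }
      rewrite Hs in Hr.
      assert (r^2 <= (s/2)^2) by nra.
      nra.
  - assert (Hg2 : ~ / exp 1 <= g^2) by nra.
    unfold Psi. destruct (Rle_dec (/ exp 1) (g^2)) as [|_]; [contradiction|].
    unfold Dd.
    assert (E : g / (1 - g)^2 - g / (1 - g^2) - 2 * (g^2 / (1 - g^2)^2)
                = 2 * g^3 / (1 - g^2)^2) by (field; split; nra).
    assert (0 <= 2 * g^3 / (1 - g^2)^2).
    { apply Rmult_le_pos; [nra|]. left. apply Rinv_0_lt_compat. nra. }
    lra.
Qed.

Lemma K_bound : 3/2 <= / exp 1 + / ln 2 + / 2 * (ln (ln 16) / ln 2).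
Proof.
  pose proof ln2_bounds as Hl.
  assert (0 < / exp 1) by (apply Rinv_0_lt_compat, exp_pos).
  assert (1 <= / ln 2).
  { replace 1 with (/ 1) by field. apply Rinv_le_contravar; lra. }
  assert (E16 : ln 16 = 4 * ln 2).
  { replace 16 with (2^4) by ring. rewrite ln_pow by lra. simpl INR. ring. }
  assert (ln 2 <= ln (ln 16)) by (apply ln_le'; lra).
  assert (1 <= ln (ln 16) / ln 2).
  { apply (Rmult_le_reg_r (ln 2)); [lra|]. unfold Rdiv. rewrite Rmult_assoc, Rinv_l by lra. lra. }
  lra.
Qed.

Lemma Psi_le_B : forall g, 0 <= g < 1 ->
  Psi g <= / (1 - g) *
         (/ exp 1 + / ln 2 + / 2 * (ln (ln 16) / ln 2)
          + / 2 * (ln (/ (1 - g)) / ln 2)).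
Proof.
  intros g Hg. pose proof K_bound as HK. pose proof ln2_bounds as Hl. pose proof expm1_lt as He.
  set (K := / exp 1 + / ln 2 + / 2 * (ln (ln 16) / ln 2)) in *.
  assert (Hu : 0 < 1 - g) by lra.
  assert (HL : 0 <= ln (/ (1 - g))).
  { rewrite <- ln_1. apply ln_le'; [lra|]. replace 1 with (/ 1) by field.
    apply Rinv_le_contravar; lra. }
  assert (HL2 : 0 <= / 2 * (ln (/ (1 - g)) / ln 2)).
  { apply Rmult_le_pos; [lra|]. apply Rmult_le_pos; [lra|]. left; apply Rinv_0_lt_compat; lra. }
  assert (Hiu : 0 < / (1 - g)) by (apply Rinv_0_lt_compat; lra).
  unfold Psi. destruct (Rle_dec (/ exp 1) g) as [Hge|Hlt].
  - destruct (t_props g ltac:(lra)) as [Ht1 Ht2].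
    assert (Htu : 1 - g <= - ln g).
    { pose proof (exp_ineq1_le (ln g)). rewrite exp_ln in H by lra. lra. }
    assert (Hln : - ln (- ln g) <= ln (/ (1 - g))).
    { rewrite ln_Rinv by lra. pose proof (ln_le' _ _ Hu Htu). lra. }
    assert (Hnum0 : 0 <= - ln (- ln g) / (2 * ln 2)).
    { assert (ln (- ln g) <= 0) by (rewrite <- ln_1; apply ln_le'; lra).
      apply Rmult_le_pos; [lra| left; apply Rinv_0_lt_compat; lra]. }
    assert (Hnum : - ln (- ln g) / (2 * ln 2) + 3/2 <= K + / 2 * (ln (/ (1 - g)) / ln 2)).
    { assert (- ln (- ln g) / (2 * ln 2) <= / 2 * (ln (/ (1 - g)) / ln 2)).
      { replace (- ln (- ln g) / (2 * ln 2)) with (/2 * (- ln (- ln g) / ln 2)) by (field; lra).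
        apply Rmult_le_compat_l; [lra|]. unfold Rdiv.
        apply Rmult_le_compat_r; [left; apply Rinv_0_lt_compat; lra| lra]. }
      lra. }
    assert (/ (- ln g) <= / (1 - g)) by (apply Rinv_le_contravar; lra).
    change (Phi g) with ((- ln (- ln g) / (2 * ln 2) + 3/2) * / (- ln g)).
    rewrite (Rmult_comm _ (/ (- ln g))).
    apply Rmult_le_compat; try lra. left; apply Rinv_0_lt_compat; lra.
  - unfold Dd.
    assert (g / (1 - g)^2 = / (1 - g) * (g / (1 - g))) by (field; lra).
    rewrite H. apply Rmult_le_compat_l; [lra|].
    assert (g / (1 - g) <= 1).
    { replace 1 with ((1 - g) / (1 - g)) at 2 by (field; lra).
      unfold Rdiv. apply Rmult_le_compat_r; [lra|lra]. }
    lra.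
Qed.

Lemma P_le_Psi : forall N g, 0 <= g < 1 -> P N g <= Psi g.
Proof.
  induction N as [N IH] using (well_founded_induction lt_wf).
  intros g Hg.
  assert (Hr : g <= g / (1 - g^2)).
  { replace g with (g / 1) at 1 by field. apply div_le; nra. }
  pose proof (Psi_rec g Hg) as Hrec.
  assert (Hg2 : 0 <= g^2 < 1) by nra.
  pose proof (Psi_nonneg (g^2) Hg2).
  destruct N as [|[|N']].
  - simpl. apply Psi_nonneg; lra.
  - assert (P 1 g = g) by (unfold P; simpl; ring). rewrite H0. lra.
  - remember (S (S N')) as N eqn:HN.
    remember (N - Nat.div2 N)%nat as M eqn:HMd.
    pose proof (Nat.div2_odd N) as Hd.
    assert (Hb : (Nat.b2n (Nat.odd N) <= 1)%nat) by (destruct (Nat.odd N); simpl; lia).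
    assert (HM1 : (N <= 2 * M)%nat) by lia.
    assert (HM2 : (M < N)%nat) by lia.
    apply Rle_trans with (P (2 * M) g); [apply P_mono; [lra|lia]|].
    rewrite P_double.
    pose proof (Q_bound M g Hg).
    pose proof (IH M HM2 (g^2) Hg2).
    lra.
Qed.

Theorem lemma6 (gamma : R) (Hg0 : 0 <= gamma) (Hg1 : gamma < 1) :
  exists s : R,
    is_series (fun n : nat => gamma ^ (Nat.succ n) * INR (a6519 (Nat.succ n))) s /\
    s <= / (1 - gamma) *
         (/ exp 1 + / ln 2 + / 2 * (ln (ln 16) / ln 2)
          + / 2 * (ln (/ (1 - gamma)) / ln 2)).
Proof.
  set (a := fun n : nat => gamma ^ (Nat.succ n) * INR (a6519 (Nat.succ n))).
  set (Bd := / (1 - gamma) *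
         (/ exp 1 + / ln 2 + / 2 * (ln (ln 16) / ln 2)
          + / 2 * (ln (/ (1 - gamma)) / ln 2))).
  assert (Hsum : forall N, sum_n a N = P (S N) gamma).
  { induction N.
    - rewrite sum_O. unfold a. simpl. ring.
    - rewrite sum_Sn, IHN. reflexivity. }
  assert (Hinc : forall n, sum_n a n <= sum_n a (S n)).
  { intro n. rewrite !Hsum. apply P_mono; [lra| lia]. }
  assert (Hbd : forall n, sum_n a n <= Bd).
  { intro n. rewrite Hsum. eapply Rle_trans; [apply P_le_Psi; lra|].
    apply Psi_le_B; lra. }
  destruct (ex_finite_lim_seq_incr _ _ Hinc Hbd) as [l Hl].
  exists l. split.
  - exact Hl.
  - pose proof (is_lim_seq_le _ _ _ _ Hbd Hl (is_lim_seq_const Bd)). simpl in H. exact H.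
Qed.
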